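(* The group $\mathrm{H}$ is a normal subgroup of $\Gamma^6_2$.
   Context: Let $\langle x,y\rangle=x_1y_1+\dots+x_6y_6-x_7y_7$ on $\mathbb{R}^7$, $H^6=\{x:\langle x,x\rangle=-1,x_7>0\}$, and $e_1,\dots,e_7$ the standard basis. $\Gamma^6=PO_{6,1}\mathbb{Z}$ is the group of $7\times7$ integer matrices preserving $\langle\cdot,\cdot\rangle$ and mapping $H^6$ to itself; $\Gamma^6_2$ is its subgroup of matrices congruent to the identity modulo $2$. $\mathrm{K}^6$ is the group of the $64$ matrices $\mathrm{diag}(\varepsilon_1,\dots,\varepsilon_6,1)$, $\varepsilon_i=\pm1$. Define vectors $u_1,\dots,u_{27}$: $u_i=-e_i$ for $1\le i\le 6$; $u_7,\dots,u_{21}$ are $e_a+e_b+e_7$ for the pairs $(a,b)=(1,2),(1,3),(2,3),(1,4),(2,4),(3,4),(1,5),(2,5),(3,5),(4,5),(1,6),(2,6),(3,6),(4,6),(5,6)$ in this order; $u_{22},\dots,u_{27}$ are $\sum_{i=1}^6e_i-e_c+2e_7$ for $c=6,5,4,3,2,1$ in this order. Let $P^6=\{x\in H^6:\langle x,u_j\rangle\le0,\ 1\le j\le27\}$ (a right-angled polytope whose $27$ sides lie in the hyperplanes $u_j^\perp$) and let $R_j$ be the reflection $x\mapsto x-2\langle x,u_j\rangle u_j$ in the $j$th side. For $7\le j\le27$ let $k_j\in\mathrm{K}^6$ be the matrix with $\varepsilon_i=-1$ exactly for $i\in N_j$, where $N_7=\{2,3,5\}$, $N_8=\{1,2,3,4,5\}$,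 $N_9=\{3,4,5\}$, $N_{10}=\{1,2,3,5,6\}$, $N_{11}=\{1,4,6\}$, $N_{12}=\{2,3,5\}$, $N_{13}=\{3,4,5\}$, $N_{14}=\{1,2,5\}$, $N_{15}=\{5\}$, $N_{16}=\{2,4,6\}$, $N_{17}=\{1,2,5\}$, $N_{18}=\{2,4,6\}$, $N_{19}=\{6\}$, $N_{20}=\{1,3,4\}$, $N_{21}=\{1,2,3,5,6\}$, $N_{22}=\{1,3,4\}$, $N_{23}=\{2\}$, $N_{24}=\{1,4,6\}$, $N_{25}=\{1,2,3,4,5\}$, $N_{26}=\{4\}$, $N_{27}=\{3\}$. Let $\mathrm{H}$ be the subgroup of $\Gamma^6$ generated by all matrices $\ell R_j\ell k_j$ with $\ell\in\mathrm{K}^6$ and $7\le j\le 27$ (these are the side-pairing transformations of a side-pairing of the polytope $Q^6=\bigcup_{\ell\in\mathrm{K}^6}\ell P^6$). *)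

(* Defs.v *)
(* Matrices act on column vectors: x |-> M *m x. *)
From HB Require Import structures.
From mathcomp Require Import all_boot all_order all_algebra.
From mathcomp Require Import reals.
Set Implicit Arguments. Unset Strict Implicit. Unset Printing Implicit Defensive.
Import Order.TTheory GRing.Theory Num.Theory.
Local Open Scope ring_scope.

(* Gram matrix J = diag(1,1,1,1,1,1,-1) of <x,y> = x1y1+...+x6y6 - x7y7
   (coordinates are 1-based in the paper: coordinate k is ordinal k-1) *)
Definition Jmat (R : pzRingType) : 'M[R]_7 :=
  diag_mx (\row_(i < 7) if (i : nat) == 6%N then -1 else 1).

Definition lform (R : pzRingType) (x y : 'cV[R]_7) : R :=
  (x^T *m Jmat R *m y) 0 0.

Definition inH6 (R : realType) (x : 'cV[R]_7) : Prop :=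
  lform x x = -1 /\ 0 < x (inord 6) 0.

(* standard basis vector e_k, k 1-based *)
Definition evec (k : nat) : 'cV[int]_7 := \col_(i < 7) ((i.+1 == k)%:Z).

Definition inGamma6 (R : realType) (M : 'M[int]_7) : Prop :=
  M^T *m Jmat int *m M = Jmat int /\
  forall x : 'cV[R]_7, inH6 x -> inH6 (map_mx intr M *m x).

Definition inGamma6_2 (R : realType) (M : 'M[int]_7) : Prop :=
  inGamma6 R M /\ forall i j : 'I_7, (2 %| M i j - (i == j)%:Z)%Z.

Definition pairs : seq (nat * nat) :=
  [:: (1,2); (1,3); (2,3); (1,4); (2,4); (3,4); (1,5); (2,5); (3,5); (4,5);
      (1,6); (2,6); (3,6); (4,6); (5,6)]%N.

Definition uvec (j : nat) : 'cV[int]_7 :=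
  if (1 <= j <= 6)%N then - evec j
  else if (7 <= j <= 21)%N then
    let ab := nth (0,0)%N pairs (j - 7) in evec ab.1 + evec ab.2 + evec 7
  else if (22 <= j <= 27)%N then
    let c := (28 - j)%N in
    \sum_(1 <= i < 7) evec i - evec c + 2%:Z *: evec 7
  else 0.

Definition Rmat (j : nat) : 'M[int]_7 :=
  1%:M - 2%:Z *: (uvec j *m (uvec j)^T *m Jmat int).

(* sign-diagonal matrix diag(eps_1,...,eps_7) with eps_k = -1 iff neg k (k 1-based) *)
Definition signdiag (neg : pred nat) : 'M[int]_7 :=
  diag_mx (\row_(i < 7) if neg i.+1 then -1 else 1).

Definition inK6 (M : 'M[int]_7) : Prop :=
  exists S : {set 'I_6}, M = signdiag (fun k => [exists a in S, a.+1 == k]).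

Definition Nset (j : nat) : seq nat :=
  nth [::] [:: [:: 2; 3; 5]; [:: 1; 2; 3; 4; 5]; [:: 3; 4; 5]; [:: 1; 2; 3; 5; 6];
    [:: 1; 4; 6]; [:: 2; 3; 5]; [:: 3; 4; 5]; [:: 1; 2; 5]; [:: 5]; [:: 2; 4; 6];
    [:: 1; 2; 5]; [:: 2; 4; 6]; [:: 6]; [:: 1; 3; 4]; [:: 1; 2; 3; 5; 6];
    [:: 1; 3; 4]; [:: 2]; [:: 1; 4; 6]; [:: 1; 2; 3; 4; 5]; [:: 4]; [:: 3]]%N
    (j - 7).

Definition kmat (j : nat) : 'M[int]_7 := signdiag (fun k => k \in Nset j).

Definition Hgen (M : 'M[int]_7) : Prop :=
  exists j : nat, (7 <= j <= 27)%N /\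
    exists l : 'M[int]_7, inK6 l /\ M = l *m Rmat j *m l *m kmat j.

Inductive inH : 'M[int]_7 -> Prop :=
  | inH_gen M : Hgen M -> inH M
  | inH_one : inH 1%:M
  | inH_mul M N : inH M -> inH N -> inH (M *m N)
  | inH_inv M : inH M -> inH (invmx M).

Definition normal_in (G H : 'M[int]_7 -> Prop) : Prop :=
  (forall M, H M -> G M) /\
  (forall g M, G g -> H M -> H (g *m M *m invmx g)).

(* Main.v *)
Require Import Defs.
From mathcomp Require Import all_boot all_order all_algebra reals.
From mathcomp Require Import ring lra zify.
Set Implicit Arguments. Unset Strict Implicit. Unset Printing Implicit Defensive.
Import Order.TTheory GRing.Theory Num.Theory.
Local Open Scope ring_scope.



Notation o k := (@inord 6 k).

Lemma sum7 (R : nmodType) (F : 'I_7 -> R) :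
  \sum_(i < 7) F i = F (o 0) + F (o 1) + F (o 2) + F (o 3) + F (o 4) + F (o 5) + F (o 6).
Proof.
transitivity (\sum_(0 <= k < 7) F (o k)).
  by rewrite big_mkord; apply: eq_bigr => i _; rewrite inord_val.
by rewrite /index_iota /= !big_cons big_nil addr0 !addrA.
Qed.

Lemma lformE (R : pzRingType) (x y : 'cV[R]_7) :
  lform x y = x (o 0) 0 * y (o 0) 0 + x (o 1) 0 * y (o 1) 0 + x (o 2) 0 * y (o 2) 0 + x (o 3) 0 * y (o 3) 0
     + x (o 4) 0 * y (o 4) 0 + x (o 5) 0 * y (o 5) 0 - x (o 6) 0 * y (o 6) 0.
Proof.
by rewrite /lform /Jmat mul_mx_diag !mxE sum7 !mxE !inordK //= !mulr1 mulrN1 mulNr.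
Qed.

Lemma CSlemma (F : realDomainType) (x0 x1 x2 x3 x4 x5 x6 y0 y1 y2 y3 y4 y5 y6 : F) :
  x0*x0 + x1*x1 + x2*x2 + x3*x3 + x4*x4 + x5*x5 - x6*x6 = -1 ->
  y0*y0 + y1*y1 + y2*y2 + y3*y3 + y4*y4 + y5*y5 - y6*y6 = -1 ->
  0 < x6 ->
  x0*y0 + x1*y1 + x2*y2 + x3*y3 + x4*y4 + x5*y5 - x6*y6 < 0 -> 0 < y6.
Proof.
move=> hx hy h6 hxy; rewrite ltNge; apply/negP => hy6.
set X := x0*x0 + x1*x1 + x2*x2 + x3*x3 + x4*x4 + x5*x5 in hx.
set Y := y0*y0 + y1*y1 + y2*y2 + y3*y3 + y4*y4 + y5*y5 in hy.
set P := x0*y0 + x1*y1 + x2*y2 + x3*y3 + x4*y4 + x5*y5 in hxy.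
have lag : X * Y - P ^+ 2 = (x0*y1-x1*y0)^+2 + (x0*y2-x2*y0)^+2 + (x0*y3-x3*y0)^+2
  + (x0*y4-x4*y0)^+2 + (x0*y5-x5*y0)^+2 + (x1*y2-x2*y1)^+2 + (x1*y3-x3*y1)^+2
  + (x1*y4-x4*y1)^+2 + (x1*y5-x5*y1)^+2 + (x2*y3-x3*y2)^+2 + (x2*y4-x4*y2)^+2
  + (x2*y5-x5*y2)^+2 + (x3*y4-x4*y3)^+2 + (x3*y5-x5*y3)^+2 + (x4*y5-x5*y4)^+2.
  by rewrite /X /Y /P; ring.
have : 0 <= X * Y - P ^+ 2 by rewrite lag; do 14! (apply: addr_ge0; last exact: sqr_ge0); exact: sqr_ge0.
have hX : X = x6 * x6 - 1 by lra.
have hY : Y = y6 * y6 - 1 by lra.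
rewrite hX hY => h.
have hP : P < x6 * y6 by lra.
have : x6 * y6 <= 0 by rewrite pmulr_rle0.
move=> h2.
have X0 : 0 <= X by rewrite /X; do 5! (apply: addr_ge0; last by rewrite -expr2 sqr_ge0); by rewrite -expr2 sqr_ge0.
have Y0 : 0 <= Y by rewrite /Y; do 5! (apply: addr_ge0; last by rewrite -expr2 sqr_ge0); by rewrite -expr2 sqr_ge0.
have hq : (x6*y6)^+2 < P^+2.
  have a1 : 0 <= - (x6 * y6) by lra.
  have a2 : - (x6*y6) < - P by lra.
  rewrite -sqrrN -(sqrrN P) !expr2; apply: ltr_pM => //; lra.
have e : (x6*y6)^+2 = (X+1)*(Y+1) by rewrite hX hY; ring.
rewrite e in hq. rewrite -hX -hY in h. nra.
Qed.

Lemma CSvec (F : realDomainType) (x y : 'cV[F]_7) :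
  lform x x = -1 -> lform y y = -1 -> 0 < x (o 6) 0 -> lform x y < 0 -> 0 < y (o 6) 0.
Proof. rewrite !lformE; exact: CSlemma. Qed.

Lemma lform_mul (R : comPzRingType) (M : 'M[R]_7) x y :
  M^T *m Jmat R *m M = Jmat R -> lform (M *m x) (M *m y) = lform x y.
Proof. by move=> h; rewrite /lform trmx_mul !mulmxA -(mulmxA _ M^T) -(mulmxA _ _ M) h. Qed.

Definition e7v (R : pzRingType) : 'cV[R]_7 := \col_i (if i == o 6 then 1 else 0).

Lemma e7vE (R : pzRingType) i : e7v R i 0 = if i == o 6 then 1 else 0.
Proof. by rewrite mxE. Qed.

Lemma oeq i j : (i < 7)%N -> (j < 7)%N -> (o i == o j) = (i == j).
Proof. by move=> hi hj; rewrite -(inj_eq val_inj) /= !inordK. Qed.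

Lemma lform_e7 (R : pzRingType) (y : 'cV[R]_7) : lform (e7v R) y = - y (o 6) 0.
Proof.
by rewrite lformE !e7vE !oeq //= !mul0r !add0r mul1r.
Qed.

Lemma lform_e7e7 (R : pzRingType) : lform (e7v R) (e7v R) = -1.
Proof. by rewrite lform_e7 e7vE eqxx. Qed.

Lemma mul_e7 (R : pzRingType) (M : 'M[R]_7) i : (M *m e7v R) i 0 = M i (o 6).
Proof.
rewrite !mxE (bigD1 (o 6)) //= mxE eqxx mulr1 big1 ?addr0 // => k /negPf hk.
by rewrite mxE hk mulr0.
Qed.

Lemma lformC (R : comPzRingType) (x y : 'cV[R]_7) : lform x y = lform y x.
Proof. by rewrite !lformE; ring. Qed.



Notation Jm := (Jmat int).

Lemma Jsq (R : pzRingType) : Jmat R *m Jmat R = 1%:M.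
Proof.
rewrite /Jmat mulmx_diag; apply/matrixP => i j; rewrite !mxE.
by case: (i == j); case: ifP => _; rewrite ?mulrNN ?mulr1 ?mulr1n ?mulr0n.
Qed.

Lemma Jtr (R : pzRingType) : (Jmat R)^T = Jmat R.
Proof. exact: tr_diag_mx. Qed.

Lemma invmx_uniq (R : comUnitRingType) n (A B : 'M[R]_n) : B *m A = 1%:M -> invmx A = B.
Proof.
move=> h; have [uB uA] := mulmx1_unit h.
by rewrite -[invmx A]mul1mx -h -mulmxA mulmxV // mulmx1.
Qed.

Lemma invmx_mul (R : comUnitRingType) n (A B : 'M[R]_n) :
  A \in unitmx -> B \in unitmx -> invmx (A *m B) = invmx B *m invmx A.
Proof.
move=> uA uB; apply: invmx_uniq.
by rewrite -mulmxA (mulmxA (invmx A)) mulVmx // mul1mx mulVmx.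
Qed.

Definition isG (g : 'M[int]_7) :=
  [/\ g^T *m Jm *m g = Jm, 0 < g (o 6) (o 6) & exists A, g = 1%:M + 2%:Z *: A].

Lemma isG_pos_col (g : 'M[int]_7) : isG g ->
  lform (g *m e7v int) (g *m e7v int) = -1 /\ 0 < (g *m e7v int) (o 6) 0.
Proof. by case=> hf hp _; rewrite lform_mul // lform_e7e7 mul_e7. Qed.

Lemma isG_mul a b : isG a -> isG b -> isG (a *m b).
Proof.
move=> ha hb; have [fa pa [A eA]] := ha; have [fb pb [B eB]] := hb.
split.
- by rewrite trmx_mul !mulmxA -(mulmxA _ a^T) -(mulmxA _ _ a) fa.
- have [ya1 ya2] := isG_pos_col ha; have [yb1 yb2] := isG_pos_col hb.
  have H := @CSvec int (a *m e7v int) (a *m b *m e7v int).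
  rewrite -mul_e7; apply: H => //.
  - by rewrite -mulmxA lform_mul.
  - by rewrite -mulmxA lform_mul // lform_e7 oppr_lt0.
- exists (A + B + 2%:Z *: (A *m B)); rewrite eA eB mulmxDl !mulmxDr mul1mx mulmx1.
  rewrite -!scalemxAl -!scalemxAr scalerA !scalerDr scalerA mul1mx.
  by rewrite -!addrA; congr (_ + _); rewrite addrCA.
Qed.

Lemma JMJE (R : pzRingType) (M : 'M[R]_7) i j :
  (Jmat R *m M *m Jmat R) i j =
  (if (i : nat) == 6%N then -1 else 1) * M i j * (if (j : nat) == 6%N then -1 else 1).
Proof. by rewrite /Jmat mul_mx_diag mul_diag_mx !mxE. Qed.

Lemma isG_inv a : isG a -> invmx a = Jm *m a^T *m Jm /\ isG (Jm *m a^T *m Jm).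
Proof.
move=> ha; have [fa pa [A eA]] := ha.
have hinv : invmx a = Jm *m a^T *m Jm.
  by apply: invmx_uniq; rewrite -!mulmxA (mulmxA a^T) fa Jsq.
split=> //.
have [_ ua] : (Jm *m a^T *m Jm) \in unitmx /\ a \in unitmx.
  by apply: mulmx1_unit; rewrite -!mulmxA (mulmxA a^T) fa Jsq.
have h1 : a *m (Jm *m a^T *m Jm) = 1%:M by rewrite -hinv mulmxV.
have h2 : a *m Jm *m a^T = Jm.
  rewrite -[LHS]mulmx1 -(Jsq int).
  have -> : a *m Jm *m a^T *m (Jm *m Jm) = a *m (Jm *m a^T *m Jm) *m Jm by rewrite !mulmxA.
  by rewrite h1 mul1mx.
split.
- have -> : (Jm *m a^T *m Jm)^T = Jm *m a *m Jm by rewrite !trmx_mul trmxK Jtr mulmxA.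
  have -> : Jm *m a *m Jm *m Jm *m (Jm *m a^T *m Jm) = Jm *m a *m (Jm *m Jm) *m Jm *m a^T *m Jm
    by rewrite !mulmxA.
  rewrite Jsq mulmx1.
  have -> : Jm *m a *m Jm *m a^T *m Jm = Jm *m (a *m Jm *m a^T) *m Jm by rewrite !mulmxA.
  by rewrite h2 Jsq mul1mx.
- by rewrite JMJE mxE inordK //= mulN1r mulrN1 opprK.
- exists (Jm *m A^T *m Jm); rewrite eA raddfD /= linearZ /= trmx1 mulmxDr mulmxDl mulmx1 Jsq.
  by rewrite -scalemxAr -scalemxAl.
Qed.



Lemma map_J (R : realType) : map_mx intr (Jmat int) = Jmat R.
Proof.
apply/matrixP => i j; rewrite !mxE; case: (i == j); rewrite ?mulr1n ?mulr0n //.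
by case: ifP.
Qed.

Lemma map_form (R : realType) (g : 'M[int]_7) :
  g^T *m Jmat int *m g = Jmat int ->
  (map_mx intr g : 'M[R]_7)^T *m Jmat R *m map_mx intr g = Jmat R.
Proof. by move=> h; rewrite -map_J map_trmx -!map_mxM h. Qed.

Lemma eqb_intr (b : bool) : (b%:R : int) = b%:Z.
Proof. by case: b. Qed.

Lemma isG_Gamma (R : realType) g : inGamma6_2 R g <-> isG g.
Proof.
split.
- case=> [[hf hH] hd]; split.
  + exact: hf.
  + have h7 : inH6 (e7v R) by split; [exact: lform_e7e7| rewrite e7vE eqxx ltr01].
    have [_] := hH _ h7.
    by rewrite mul_e7 mxE ltr0z.
  + exists (\matrix_(i, j) ((g i j - (i == j)%:Z) %/ 2)%Z).
    apply/matrixP => i j; rewrite !mxE mulrC divzK // eqb_intr.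
    by rewrite addrC subrK.
- case=> hf hp [A eA]; split; [split=> //|].
  + move=> x [hx1 hx2]; split.
    * by rewrite lform_mul ?map_form.
    * have H := @CSvec R (map_mx intr g *m e7v R) (map_mx intr g *m x).
      apply: H.
      -- by rewrite lform_mul ?map_form // lform_e7e7.
      -- by rewrite lform_mul ?map_form.
      -- by rewrite mul_e7 mxE ltr0z.
      -- by rewrite lform_mul ?map_form // lform_e7 oppr_lt0.
  + move=> i j; rewrite eA !mxE eqb_intr addrC addrK.
    by apply: dvdz_mulr; rewrite dvdzz.
Qed.



Definition utab : seq (seq int) :=
  [:: [:: 1; 1; 0; 0; 0; 0; 1]; [:: 1; 0; 1; 0; 0; 0; 1]; [:: 0; 1; 1; 0; 0; 0; 1];
      [:: 1; 0; 0; 1; 0; 0; 1]; [:: 0; 1; 0; 1; 0; 0; 1]; [:: 0; 0; 1; 1; 0; 0; 1];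
      [:: 1; 0; 0; 0; 1; 0; 1]; [:: 0; 1; 0; 0; 1; 0; 1]; [:: 0; 0; 1; 0; 1; 0; 1];
      [:: 0; 0; 0; 1; 1; 0; 1]; [:: 1; 0; 0; 0; 0; 1; 1]; [:: 0; 1; 0; 0; 0; 1; 1];
      [:: 0; 0; 1; 0; 0; 1; 1]; [:: 0; 0; 0; 1; 0; 1; 1]; [:: 0; 0; 0; 0; 1; 1; 1];
      [:: 1; 1; 1; 1; 1; 0; 2]; [:: 1; 1; 1; 1; 0; 1; 2]; [:: 1; 1; 1; 0; 1; 1; 2];
      [:: 1; 1; 0; 1; 1; 1; 2]; [:: 1; 0; 1; 1; 1; 1; 2]; [:: 0; 1; 1; 1; 1; 1; 2]].

Definition uc (j : nat) (i : nat) : int := nth 0 (nth [::] utab (j - 7)) i.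

Lemma evecE k (i : 'I_7) : evec k i 0 = (i.+1 == k)%:Z.
Proof. by rewrite mxE. Qed.

Lemma uvecE j (i : 'I_7) : (7 <= j <= 27)%N -> uvec j i 0 = uc j i.
Proof.
case/andP => h1 h2.
have hn : (j - 7 < 21)%N by lia.
have -> : j = ((j - 7) + 7)%N by lia.
move: (j - 7)%N hn => n hn.
case: i => [i Hi].
rewrite /uvec /uc addnK.
do 21! (case: n hn => [|n] hn /=;
  [rewrite !mxE ?summxE /index_iota /= ?big_cons ?big_nil ?mxE;
   by do 7! (case: i Hi => [|i] Hi //)|]).
by [].
Qed.

Lemma lform_u (y : 'cV[int]_7) j : (7 <= j <= 27)%N ->
  lform y (uvec j) = y (o 0) 0 * uc j 0 + y (o 1) 0 * uc j 1 + y (o 2) 0 * uc j 2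
   + y (o 3) 0 * uc j 3 + y (o 4) 0 * uc j 4 + y (o 5) 0 * uc j 5 - y (o 6) 0 * uc j 6.
Proof. by move=> hj; rewrite lformE !uvecE // !inordK. Qed.

Lemma lform_uu j : (7 <= j <= 27)%N -> lform (uvec j) (uvec j) = 1.
Proof.
move=> hj; rewrite lformE !uvecE // !inordK //.
case/andP: hj => h1 h2.
have hn : (j - 7 < 21)%N by lia.
have -> : j = ((j - 7) + 7)%N by lia.
move: (j - 7)%N hn => n hn; rewrite /uc addnK.
by do 21! (case: n hn => [|n] hn; [by []|]).
Qed.

Lemma uc6_pos j : (7 <= j <= 27)%N -> 0 < uc j 6.
Proof.
case/andP => h1 h2.
have hn : (j - 7 < 21)%N by lia.
have -> : j = ((j - 7) + 7)%N by lia.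
move: (j - 7)%N hn => n hn; rewrite /uc addnK.
by do 21! (case: n hn => [|n] hn; [by []|]).
Qed.



Lemma sdE p (i j : 'I_7) : signdiag p i j = ((if p i.+1 then -1 else 1) *+ (i == j)).
Proof. by rewrite !mxE. Qed.

Lemma sd_ext p q : (forall i : 'I_7, p i.+1 = q i.+1) -> signdiag p = signdiag q.
Proof. by move=> h; apply/matrixP => i j; rewrite !sdE h. Qed.

Lemma sd_mul p q : signdiag p *m signdiag q = signdiag (fun k => p k (+) q k).
Proof.
rewrite /signdiag mulmx_diag; congr diag_mx; apply/rowP => i; rewrite !mxE.
by case: (p i.+1); case: (q i.+1); rewrite ?mulrNN ?mulr1 ?mulN1r ?mul1r.
Qed.

Lemma sd_false : signdiag (fun _ => false) = 1%:M.
Proof. by apply/matrixP => i j; rewrite !mxE. Qed.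

Lemma sd_sq p : signdiag p *m signdiag p = 1%:M.
Proof. by rewrite sd_mul -sd_false; apply: sd_ext => i; rewrite addbb. Qed.

Lemma sd_tr p : (signdiag p)^T = signdiag p.
Proof. exact: tr_diag_mx. Qed.

Lemma sd_comm p q : signdiag p *m signdiag q = signdiag q *m signdiag p.
Proof. by rewrite !sd_mul; apply: sd_ext => i; rewrite addbC. Qed.

Lemma isG_sd p : p 7%N = false -> isG (signdiag p).
Proof.
move=> h7; split.
- rewrite sd_tr /Jmat /signdiag !mulmx_diag; congr diag_mx; apply/rowP => i; rewrite !mxE.
  by case: (p i.+1); case: ifP; rewrite ?mulrNN ?mulr1 ?mulN1r ?mul1r ?mulrN1 ?opprK.
- by rewrite sdE inordK //= h7 eqxx.
- exists (diag_mx (\row_i (if p i.+1 then -1 else 0))); apply/matrixP => i j.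
  rewrite !mxE; case: (i == j); rewrite ?mulr1n ?mulr0n ?addr0 //.
  by case: (p i.+1).
Qed.

Definition Kpred (S : {set 'I_6}) := fun k => [exists a in S, a.+1 == k].

Lemma Kpred7 S : Kpred S 7%N = false.
Proof. by apply/existsP => -[a /andP [_ /eqP h]]; have := ltn_ord a; rewrite h. Qed.

Lemma Kpred_of (P : pred nat) : P 7%N = false ->
  forall i : 'I_7, Kpred [set a : 'I_6 | P a.+1] i.+1 = P i.+1.
Proof.
move=> h7 i; apply/existsP; case: ifP => hP.
- have hi : (i < 6)%N.
    rewrite ltnNge; apply/negP => h6.
    have e : i.+1 = 7%N by have := ltn_ord i; lia.
    by move: hP; rewrite e h7.
  by exists (Ordinal hi); rewrite inE /= hP eqxx.
- by case=> a /andP [ha /eqP e]; move: ha; rewrite inE e hP.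
Qed.

Lemma inK6_sd M : inK6 M -> exists p, M = signdiag p /\ p 7%N = false.
Proof. by case=> S ->; exists (Kpred S); split => //; exact: Kpred7. Qed.

Lemma inK6_of P : P 7%N = false -> inK6 (signdiag P).
Proof.
move=> h7; exists [set a : 'I_6 | P a.+1]; apply: sd_ext => i.
by rewrite -/(Kpred _ _) Kpred_of.
Qed.

Lemma inK6_1 : inK6 1%:M.
Proof. by rewrite -sd_false; apply: inK6_of. Qed.

Lemma inK6_mul a b : inK6 a -> inK6 b -> inK6 (a *m b).
Proof.
move=> /inK6_sd [p [-> hp]] /inK6_sd [q [-> hq]].
by rewrite sd_mul; apply: inK6_of; rewrite hp hq.
Qed.

Lemma inK6_sq a : inK6 a -> a *m a = 1%:M.
Proof. by move=> /inK6_sd [p [-> _]]; exact: sd_sq. Qed.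

Lemma inK6_comm a b : inK6 a -> inK6 b -> a *m b = b *m a.
Proof. by move=> /inK6_sd [p [-> _]] /inK6_sd [q [-> _]]; exact: sd_comm. Qed.

Lemma inK6_isG a : inK6 a -> isG a.
Proof. by move=> /inK6_sd [p [-> hp]]; exact: isG_sd. Qed.

Lemma Nset7 j : (7%N \in Nset j) = false.
Proof.
rewrite /Nset; move: (j - 7)%N => n.
by do 21! (case: n => [//|n]); rewrite nth_default.
Qed.

Lemma inK6_k j : inK6 (kmat j).
Proof. by apply: inK6_of; exact: Nset7. Qed.



Lemma uJu j : (7 <= j <= 27)%N -> (uvec j)^T *m Jm *m uvec j = 1%:M.
Proof.
move=> hj; apply/matrixP => a b; rewrite !ord1.
by have := lform_uu hj; rewrite /lform => ->; rewrite mxE.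
Qed.

Section Refl.
Variable u : 'cV[int]_7.
Hypothesis hu : u^T *m Jm *m u = 1%:M.
Let P := u *m u^T *m Jm.
Let Rm := 1%:M - 2%:Z *: P.

Lemma PP : P *m P = P.
Proof.
rewrite /P.
have -> : u *m u^T *m Jm *m (u *m u^T *m Jm) = u *m (u^T *m Jm *m u) *m u^T *m Jm by rewrite !mulmxA.
by rewrite hu mulmx1.
Qed.

Lemma Rsq : Rm *m Rm = 1%:M.
Proof.
rewrite /Rm mulmxBl !mulmxBr !mul1mx mulmx1 -!scalemxAl -!scalemxAr PP scalerA.
by rewrite -scalerBl (_ : 2%:Z - 2%:Z * 2%:Z = - 2%:Z) // scaleNr opprK subrK.
Qed.

Lemma RtrJ : Rm^T *m Jm = Jm *m Rm.
Proof.
rewrite /Rm /P raddfB /= linearZ /= trmx1 !trmx_mul trmxK Jtr.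
rewrite mulmxBl mulmxBr mul1mx mulmx1 -!scalemxAl -!scalemxAr; congr (_ - _ *: _).
by rewrite !mulmxA.
Qed.

Lemma isG_R : isG Rm.
Proof.
split.
- by rewrite RtrJ -mulmxA Rsq mulmx1.
- rewrite /Rm /P /Jmat mul_mx_diag !mxE big_ord1 !mxE inordK //= eqxx mulrN1 mulrN opprK.
  rewrite mulr1n; set x := u _ _; have := sqr_ge0 x; rewrite expr2; lia.
- by exists (- P); rewrite /Rm scalerN.
Qed.

End Refl.

Lemma Rmat_sq j : (7 <= j <= 27)%N -> Rmat j *m Rmat j = 1%:M.
Proof. by move=> hj; apply: Rsq; exact: uJu. Qed.

Lemma isG_Rmat j : (7 <= j <= 27)%N -> isG (Rmat j).
Proof. by move=> hj; apply: isG_R; exact: uJu. Qed.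

Lemma Rmat_vec j (y : 'cV[int]_7) :
  Rmat j *m y = y - (2%:Z * lform (uvec j) y) *: uvec j.
Proof.
rewrite /Rmat mulmxBl mul1mx -scalemxAl -!mulmxA.
have -> : (uvec j)^T *m (Jm *m y) = (lform (uvec j) y)%:M.
  by apply/matrixP => a b; rewrite !ord1 /lform -mulmxA [RHS]mxE eqxx mulr1n.
by rewrite mul_mx_scalar scalerA.
Qed.

Lemma Rmat_col (g : 'M[int]_7) j : (7 <= j <= 27)%N ->
  (Rmat j *m g) (o 6) (o 6) = g (o 6) (o 6) - 2 * lform (g *m e7v int) (uvec j) * uc j 6.
Proof.
move=> hj.
rewrite -!mul_e7 -mulmxA Rmat_vec !mxE uvecE // inordK // lformC.
by rewrite -mulrA.
Qed.



Lemma isG_unit a : isG a -> a \in unitmx.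
Proof.
case=> hf _ _.
have [_ ua] : (Jm *m a^T *m Jm) \in unitmx /\ a \in unitmx.
  by apply: mulmx1_unit; rewrite -!mulmxA (mulmxA a^T) hf Jsq.
exact: ua.
Qed.

Lemma inH_isG M : inH M -> isG M.
Proof.
elim => {M}.
- move=> M [j [hj [l [hl ->]]]].
  have hlG := inK6_isG hl.
  apply: isG_mul; last exact: inK6_isG (inK6_k j).
  apply: isG_mul => //; apply: isG_mul => //; exact: isG_Rmat.
- exact: inK6_isG inK6_1.
- by move=> M N _ hM _ hN; apply: isG_mul.
- by move=> M _ hM; have [-> ?] := isG_inv hM.
Qed.

Lemma conj_invmx (g M : 'M[int]_7) : g \in unitmx ->
  g *m invmx M *m invmx g = invmx (g *m M *m invmx g).
Proof.
move=> ug; case uM: (M \in unitmx).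
- rewrite !invmx_mul ?unitmx_mul ?ug ?uM ?unitmx_inv //.
  by rewrite invmxK mulmxA.
- have nM : M \in [predC unitmx] by rewrite inE uM.
  have nC : g *m M *m invmx g \in [predC unitmx].
    by rewrite inE !unitmx_mul unitmx_inv ug uM.
  by rewrite (invmx_out nM) (invmx_out nC).
Qed.

Definition normalizes (g : 'M[int]_7) :=
  g \in unitmx /\ forall M, inH M -> inH (g *m M *m invmx g).

Lemma normalizes_mul a b : normalizes a -> normalizes b -> normalizes (a *m b).
Proof.
move=> [ua ha] [ub hb]; split; first by rewrite unitmx_mul ua ub.
move=> M hM; rewrite invmx_mul //.
have -> : a *m b *m M *m (invmx b *m invmx a) = a *m (b *m M *m invmx b) *m invmx a
  by rewrite !mulmxA.
exact/ha/hb.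
Qed.

Lemma normalizes_K m : inK6 m -> normalizes m.
Proof.
move=> hm.
have mm := inK6_sq hm.
have im : invmx m = m by apply: invmx_uniq.
have um : m \in unitmx by case: (mulmx1_unit mm).
split=> //; rewrite im => M.
elim => {M}.
- move=> M [j [hj [l [hl ->]]]]; apply: inH_gen; exists j; split=> //.
  exists (m *m l); split; first exact: inK6_mul.
  have hk := inK6_k j.
  rewrite !mulmxA -!(mulmxA _ _ m) (inK6_comm hk hm) !mulmxA -!(mulmxA _ l m) (inK6_comm hl hm).
  by rewrite !mulmxA.
- by rewrite mulmx1 mm; exact: inH_one.
- move=> M N _ hM _ hN.
  have -> : m *m (M *m N) *m m = (m *m M *m m) *m (m *m N *m m).
    by rewrite -!mulmxA (mulmxA m m) mm mul1mx !mulmxA.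
  exact: inH_mul.
- move=> M _ hM; rewrite -{2}im conj_invmx // im; exact: inH_inv.
Qed.

Lemma normalizes_H h : inH h -> normalizes h.
Proof.
move=> hh; split; first exact/isG_unit/inH_isG.
move=> M hM; apply: inH_mul; first exact: inH_mul.
exact: inH_inv.
Qed.

Lemma normalizes_R j : (7 <= j <= 27)%N -> normalizes (Rmat j).
Proof.
move=> hj.
have hk := inK6_k j.
have -> : Rmat j = (Rmat j *m kmat j) *m kmat j by rewrite -mulmxA inK6_sq // mulmx1.
apply: normalizes_mul; last exact: normalizes_K.
apply: normalizes_H; apply: inH_gen; exists j; split=> //.
by exists 1%:M; split; [exact: inK6_1| rewrite mul1mx mulmx1].
Qed.

Inductive inGen : 'M[int]_7 -> Prop :=
  | GK M : inK6 M -> inGen M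
  | GR j g : (7 <= j <= 27)%N -> inGen g -> inGen (Rmat j *m g)
  | GKm M g : inK6 M -> inGen g -> inGen (M *m g).

Lemma normalizes_Gen g : inGen g -> normalizes g.
Proof.
elim => {g}.
- by move=> M hM; apply: normalizes_K.
- by move=> j g hj _ hg; apply: normalizes_mul => //; apply: normalizes_R.
- by move=> M g hM _ hg; apply: normalizes_mul => //; apply: normalizes_K.
Qed.



Lemma core_arith (a b c t S1 Q : int) :
  0 <= c -> c <= b -> b <= a -> a + b <= t -> a + S1 - c <= 2 * t + 1 ->
  Q <= (b + c) * S1 - 5 * b * c -> a ^+ 2 + Q = t ^+ 2 + t ->
  [/\ c = b, a = b & t = 2 * b].
Proof.
move=> h0 h1 h2 h3 h4 h5 h6.
have hF : t ^+ 2 + t <= a ^+ 2 + (b + c) * (2 * t + 1 + c - a) - 5 * b * c.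
  have : (b + c) * S1 <= (b + c) * (2 * t + 1 + c - a) by apply: ler_wpM2l; lia.
  lia.
have idD : a ^+ 2 + (b + c) * (2 * t + 1 + c - a) - 5 * b * c - (t ^+ 2 + t) =
  (c - b) * (c + 1) - (t - 2 * b) * (t - 2 * c + 1) + (a - b) * (a - c) by ring.
have hab : (a - b) * (a - c) <= (t - 2 * b) * (t - 2 * c).
  apply: ler_pM; lia.
have hs : 0 <= t - 2 * b by lia.
have hcb : (c - b) * (c + 1) <= 0 by apply: mulr_le0_ge0; lia.
have e1 : t - 2 * b = 0 by nia.
have e2 : (c - b) * (c + 1) = 0 by nia.
have e3 : c = b.
  move/eqP: e2; rewrite mulf_eq0 => /orP [/eqP|/eqP]; lia.
split; lia.
Qed.

Lemma ex_max (P : pred 'I_6) (f : 'I_6 -> nat) x0 : P x0 ->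
  exists2 k, P k & forall i, P i -> (f i <= f k)%N.
Proof. by move=> h; case: (arg_maxnP f h) => k Pk hk; exists k. Qed.

Lemma ex_min (P : pred 'I_6) (f : 'I_6 -> nat) x0 : P x0 ->
  exists2 k, P k & forall i, P i -> (f k <= f i)%N.
Proof. by move=> h; case: (arg_minnP f h) => k Pk hk; exists k. Qed.

Lemma sum_const5 (k : 'I_6) (x : int) : \sum_(i < 6 | i != k) x = 5 * x.
Proof.
have h : \sum_(i < 6) x = x + \sum_(i < 6 | i != k) x by rewrite (bigD1 k).
rewrite sumr_const card_ord in h.
have : x *+ 6 - x = \sum_(i < 6 | i != k) x by rewrite h addrC addKr.
move=> <-; rewrite -mulr_natl; lia.
Qed.

Lemma classify (w : 'I_6 -> int) (t : int) :
  (forall i, 0 <= w i) ->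
  (forall a b, a != b -> w a + w b <= t) ->
  (forall c, \sum_i w i - w c <= 2 * t + 1) ->
  \sum_i w i ^+ 2 = t ^+ 2 + t ->
  exists2 b, (b = 0 \/ b = 1) & (forall i, w i = b) /\ t = 2 * b.
Proof.
move=> hw hp h5 hn.
have habs i : Posz `|w i|%N = w i by rewrite gez0_abs.
have [k _ hk] := @ex_max predT (fun i => `|w i|%N) ord0 isT.
have hk' i : w i <= w k by rewrite -(habs i) -(habs k) lez_nat; exact: hk.
pose x1 : 'I_6 := if k == ord0 then inord 1 else ord0.
have hx1 : x1 != k.
  rewrite /x1; case: (eqVneq k ord0) => [ek|hne]; last by rewrite eq_sym.
  by rewrite ek -(inj_eq val_inj) /= inordK.
have [kb hkb hb] := @ex_max [pred i | i != k] (fun i => `|w i|%N) x1 hx1.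
have [kc hkc hc] := @ex_min [pred i | i != k] (fun i => `|w i|%N) x1 hx1.
have hb' i : i != k -> w i <= w kb by move=> hi; rewrite -(habs i) -(habs kb) lez_nat; exact: hb.
have hc' i : i != k -> w kc <= w i by move=> hi; rewrite -(habs i) -(habs kc) lez_nat; exact: hc.
set a := w k; set b := w kb; set c := w kc.
set S1 := \sum_(i < 6 | i != k) w i.
set Q := \sum_(i < 6 | i != k) w i ^+ 2.
have tot : \sum_i w i = a + S1 by rewrite (bigD1 k).
have totQ : \sum_i w i ^+ 2 = a ^+ 2 + Q by rewrite (bigD1 k).
have quad : Q <= (b + c) * S1 - 5 * b * c.
  have : 0 <= \sum_(i < 6 | i != k) ((w i - c) * (b - w i)).
    apply: sumr_ge0 => i hi; apply: mulr_ge0; rewrite subr_ge0; [exact: hc'|exact: hb'].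
  have -> : \sum_(i < 6 | i != k) ((w i - c) * (b - w i)) =
    \sum_(i < 6 | i != k) ((b + c) * w i) - Q - \sum_(i < 6 | i != k) (b * c).
    rewrite /Q -sumrB -sumrB; apply: eq_bigr => i _; ring.
  by rewrite -mulr_sumr sum_const5 -/S1; lia.
have [e1 e2 e3] : [/\ c = b, a = b & t = 2 * b].
  apply: (core_arith (S1 := S1) (Q := Q)) => //.
  - exact: hw.
  - exact: hc' kb hkb.
  - exact: hk' kb.
  - by apply: hp; rewrite eq_sym.
  - by have := h5 kc; rewrite tot.
  - by rewrite -totQ.
have hall i : w i = b.
  case: (eqVneq i k) => [->|hi]; first exact: e2.
  by have := hb' i hi; have := hc' i hi; rewrite -/c -/b; lia.
have : 5 * b <= 4 * b + 1.
  have := h5 kc; rewrite tot -/c e1 e2.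
  have -> : S1 = 5 * b by rewrite /S1 (eq_bigr (fun _ => b)) ?sum_const5 // => i _; exact: hall.
  lia.
have hb0 : 0 <= b by exact: hw.
move=> hb1; exists b; first lia.
by split.
Qed.



Lemma sum6 (R : nmodType) (F : 'I_6 -> R) :
  \sum_(i < 6) F i = F (inord 0) + F (inord 1) + F (inord 2) + F (inord 3) + F (inord 4) + F (inord 5).
Proof.
transitivity (\sum_(0 <= k < 6) F (inord k)).
  by rewrite big_mkord; apply: eq_bigr => i _; rewrite inord_val.
by rewrite /index_iota /= !big_cons big_nil addr0 !addrA.
Qed.

Lemma colform g (i j : 'I_7) : isG g -> lform (col i g) (col j g) = Jm i j.
Proof.
case=> hf _ _; rewrite -hf /lform !mxE; apply: eq_bigr => k _; rewrite !mxE.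
by congr (_ * _); apply: eq_bigr => l _; rewrite !mxE.
Qed.

Lemma JmE a b : (a < 7)%N -> (b < 7)%N ->
  Jm (o a) (o b) = if a == b then (if a == 6%N then -1 else 1) else 0.
Proof. by move=> ha hb; rewrite /Jmat !mxE oeq // !inordK //; case: (a == b). Qed.

Lemma gEnt g A a b : g = 1%:M + 2%:Z *: A -> (a < 7)%N -> (b < 7)%N ->
  g (o a) (o b) = (a == b)%:R + 2 * A (o a) (o b).
Proof. by move=> -> ha hb; rewrite !mxE oeq. Qed.

Lemma stab_col g i : isG g -> (forall k, (k < 6)%N -> g (o k) (o 6) = 0) -> g (o 6) (o 6) = 1 ->
  (i < 6)%N ->
  [/\ g (o 6) (o i) = 0, forall k, (k < 6)%N -> k != i -> g (o k) (o i) = 0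
    & g (o i) (o i) = 1 \/ g (o i) (o i) = -1].
Proof.
move=> hg h6 g66 hi; have [_ _ [A eA]] := hg.
have f1 := colform (o i) (o 6) hg; have f2 := colform (o i) (o i) hg.
have hi7 : (i < 7)%N by lia.
rewrite (JmE hi7 (isT : (6 < 7)%N)) in f1; rewrite (JmE hi7 hi7) in f2.
rewrite !lformE !mxE in f1 f2; clear hi7.
rewrite g66 !h6 // in f1.
have e6 : g (o 6) (o i) = 0.
  move: f1; case: (i =P 6%N) => [ei|_]; first by rewrite ei in hi.
  lia.
move: f2; rewrite e6 mulr0 subr0 (_ : (i == 6%N) = false); last by apply/eqP => ei; rewrite ei in hi.
rewrite eqxx => f2.
split=> //; clear f1 e6.
- move=> k hk hki.
  rewrite (gEnt eA) //; move: f2; rewrite !(gEnt eA) //; try lia.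
  by case: i hi hki => [|[|[|[|[|[|//]]]]]] _ /=;
    case: k hk => [|[|[|[|[|[|//]]]]]] _ //= _; rewrite ?mulr1n ?mulr0n; nia.
- rewrite (gEnt eA) //; move: f2; rewrite !(gEnt eA) //; try lia.
  by case: i hi => [|[|[|[|[|[|//]]]]]] _ /=; rewrite ?mulr1n ?mulr0n; nia.
Qed.

Lemma stab g : isG g -> (forall k, (k < 6)%N -> g (o k) (o 6) = 0) -> g (o 6) (o 6) = 1 ->
  inK6 g.
Proof.
move=> hg h6 g66.
pose p := fun k : nat => (k != 7%N) && (g (o k.-1) (o k.-1) < 0).
have -> : g = signdiag p.
  apply/matrixP => i j; rewrite -[i]inord_val -[j]inord_val sdE.
  move: (ltn_ord i) (ltn_ord j); move: (nat_of_ord i) (nat_of_ord j) => a b ha hb.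
  rewrite oeq // inordK //.
  case: (eqVneq a b) => [<-|hab].
  - rewrite mulr1n /p /=.
    case: (ltnP a 6) => ha6.
    + have [_ _ h] := stab_col hg h6 g66 ha6.
      rewrite (_ : (a.+1 != 7%N) = true); last by apply/eqP => e; lia.
      by case: h => ->.
    + have -> : a = 6%N by lia.
      by rewrite g66.
  - rewrite mulr0n.
    case: (ltnP b 6) => hb6.
    + have [e1 e2 _] := stab_col hg h6 g66 hb6.
      case: (ltnP a 6) => ha6; first by apply: e2.
      by have -> : a = 6%N by lia.
    + have eb : b = 6%N by lia.
      rewrite eb; apply: h6; lia.
by apply: inK6_of.
Qed.

Lemma sq_small (x k : int) : 0 <= k -> x ^+ 2 < (k + 1) ^+ 2 -> - k <= x /\ x <= k.
Proof. move=> hk h; split; nia. Qed.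

Lemma int_sq_ge (x : int) : x <= x ^+ 2 /\ - x <= x ^+ 2.
Proof. split; nia. Qed.

Lemma cs6 (c0 c1 c2 c3 c4 c5 : int) :
  (c0 + c1 + c2 + c3 + c4 + c5) ^+ 2 <= 6 * (c0 ^+ 2 + c1 ^+ 2 + c2 ^+ 2 + c3 ^+ 2 + c4 ^+ 2 + c5 ^+ 2).
Proof.
rewrite -subr_ge0.
have -> : 6 * (c0 ^+ 2 + c1 ^+ 2 + c2 ^+ 2 + c3 ^+ 2 + c4 ^+ 2 + c5 ^+ 2) - (c0 + c1 + c2 + c3 + c4 + c5) ^+ 2
  = (c0 - c1)^+2 + (c0 - c2)^+2 + (c0 - c3)^+2 + (c0 - c4)^+2 + (c0 - c5)^+2
  + (c1 - c2)^+2 + (c1 - c3)^+2 + (c1 - c4)^+2 + (c1 - c5)^+2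
  + (c2 - c3)^+2 + (c2 - c4)^+2 + (c2 - c5)^+2
  + (c3 - c4)^+2 + (c3 - c5)^+2 + (c4 - c5)^+2 by ring.
by do 14! (apply: addr_ge0; last exact: sqr_ge0); exact: sqr_ge0.
Qed.

Lemma ns_step1 (S X e : int) : S = 5 * e -> X = 1 + 4 * e ^+ 2 -> S ^+ 2 <= 6 * X ->
  - 2 <= e /\ e <= 2.
Proof.
move=> -> -> h; apply: sq_small; first by lia.
rewrite exprMn in h.
have -> : ((2 : int) + 1) ^+ 2 = 9 by [].
rewrite (_ : ((5 : int)) ^+ 2 = 25) // in h.
lia.
Qed.

Lemma no_special_arith (a0 a1 a2 a3 a4 a5 e : int) :
  2 * (1 + 2 * a0) + 2 * (2 * a1) + 2 * (2 * a2) + 2 * (2 * a3) + 2 * (2 * a4) + 2 * (2 * a5)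
    - 5 * (2 * e) = 0 ->
  (1 + 2 * a0) ^+ 2 + (2 * a1) ^+ 2 + (2 * a2) ^+ 2 + (2 * a3) ^+ 2 + (2 * a4) ^+ 2
    + (2 * a5) ^+ 2 - (2 * e) ^+ 2 = 1 -> False.
Proof.
move=> h1 h2.
have hS : (1 + 2 * a0) + 2 * a1 + 2 * a2 + 2 * a3 + 2 * a4 + 2 * a5 = 5 * e by lia.
have hX : (1 + 2 * a0) ^+ 2 + (2 * a1) ^+ 2 + (2 * a2) ^+ 2 + (2 * a3) ^+ 2 + (2 * a4) ^+ 2
    + (2 * a5) ^+ 2 = 1 + 4 * e ^+ 2.
  by rewrite -(subrK ((2 * e) ^+ 2) (_ + _)) h2 exprMn; lia.
have [hb1 hb2] := ns_step1 hS hX (cs6 (1 + 2 * a0) (2 * a1) (2 * a2) (2 * a3) (2 * a4) (2 * a5)).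
have he2 : e = 1 \/ e = -1 by clear h2 hX; lia.
clear h1 h2.
move: hX; rewrite !exprMn (_ : (2 : int) ^+ 2 = 4) //.
have ee : e ^+ 2 = 1 by case: he2 => ->.
rewrite ee => hX.
have hc : (1 + 2 * a0) ^+ 2 <= 5.
  have := sqr_ge0 a1; have := sqr_ge0 a2; have := sqr_ge0 a3; have := sqr_ge0 a4; have := sqr_ge0 a5.
  lia.
have h9 : (5 : int) < (2 + 1) ^+ 2 by [].
have [hc1 hc2] := @sq_small (1 + 2 * a0) 2 ltac:(lia) (le_lt_trans hc h9).
have ha0 : a0 = 0 \/ a0 = -1 by move: hc1 hc2; clear; lia.
have hsq : a1 ^+ 2 + a2 ^+ 2 + a3 ^+ 2 + a4 ^+ 2 + a5 ^+ 2 = 1.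
  by move: hX; clear -ha0; case: ha0 => ->; rewrite ?mulr0 ?addr0 ?mulrN1; lia.
clear hX hc hc1 hc2 h9 ee.
have [q1 r1] := int_sq_ge a1; have [q2 r2] := int_sq_ge a2; have [q3 r3] := int_sq_ge a3.
have [q4 r4] := int_sq_ge a4; have [q5 r5] := int_sq_ge a5.
move: hS; clear -he2 ha0 hsq q1 q2 q3 q4 q5 r1 r2 r3 r4 r5.
case: he2 => ->; case: ha0 => ->; lia.
Qed.



Lemma no_special g : isG g -> (forall k, (k < 6)%N -> g (o k) (o 6) = 2) ->
  g (o 6) (o 6) = 5 -> False.
Proof.
move=> hg h6 g66; have [_ _ [A eA]] := hg.
have f1 := colform (o 0) (o 6) hg; have f2 := colform (o 0) (o 0) hg.
rewrite JmE // in f1; rewrite JmE // in f2.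
rewrite !lformE !mxE in f1 f2.
rewrite g66 !h6 // in f1.
move: f1 f2; rewrite !(gEnt eA) //= ?mulr1n ?mulr0n ?add0r => f1 f2.
apply: (@no_special_arith (A (o 0) (o 0)) (A (o 1) (o 0)) (A (o 2) (o 0)) (A (o 3) (o 0))
   (A (o 4) (o 0)) (A (o 5) (o 0)) (A (o 6) (o 0))).
- rewrite -[RHS]f1; ring.
- rewrite -[RHS]f2; ring.
Qed.

Ltac getu hterm eA H j := have H := hterm j isT; rewrite lform_u // !mul_e7 !(gEnt eA) //= ?mulr1n ?mulr0n ?add0r /uc /= in H.

Lemma terminal g : isG g -> (forall k, (k < 6)%N -> 0 <= g (o k) (o 6)) ->
  (forall j, (7 <= j <= 27)%N -> lform (g *m e7v int) (uvec j) <= 0) -> inK6 g.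
Proof.
move=> hg hnn hterm; have [_ _ [A eA]] := hg.
have hN := isG_pos_col hg; case: hN => hN _.
rewrite lformE !mul_e7 !(gEnt eA) //= ?mulr1n ?mulr0n ?add0r in hN.
getu hterm eA H7 7%N. getu hterm eA H8 8%N. getu hterm eA H9 9%N. getu hterm eA H10 10%N.
getu hterm eA H11 11%N. getu hterm eA H12 12%N. getu hterm eA H13 13%N. getu hterm eA H14 14%N.
getu hterm eA H15 15%N. getu hterm eA H16 16%N. getu hterm eA H17 17%N. getu hterm eA H18 18%N.
getu hterm eA H19 19%N. getu hterm eA H20 20%N. getu hterm eA H21 21%N. getu hterm eA H22 22%N.
getu hterm eA H23 23%N. getu hterm eA H24 24%N. getu hterm eA H25 25%N. getu hterm eA H26 26%N.
getu hterm eA H27 27%N.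
have [b hb [hall ht]] : exists2 b, (b = 0 \/ b = 1) &
    (forall i : 'I_6, A (o i) (o 6) = b) /\ A (o 6) (o 6) = 2 * b.
  apply: classify.
  - move=> i; have hi7 : (i < 7)%N by have := ltn_ord i; lia.
    have := hnn i (ltn_ord i); rewrite (gEnt eA) //.
    rewrite (_ : ((i : nat) == 6%N) = false) ?mulr0n ?add0r; last by apply/eqP=> e; have := ltn_ord i; lia.
    lia.
  - clear hN; move=> [[|[|[|[|[|[|//]]]]]] ha] [[|[|[|[|[|[|//]]]]]] hb] //= _; lia.
  - clear hN; move=> c; rewrite sum6 !inordK //.
    by case: c => [[|[|[|[|[|[|//]]]]]] hc] /=; lia.
  - rewrite sum6 !inordK //; rewrite !expr2.
    apply/eqP; rewrite -subr_eq0; apply/eqP; apply: (@mulfI _ (4:int)) => //.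
    rewrite mulr0 -[RHS](subrr (-1)) -{1}hN; ring.
have hcol k : (k < 6)%N -> g (o k) (o 6) = 2 * b.
  move=> hk; rewrite (gEnt eA) //; last by lia.
  rewrite (_ : (k == 6%N) = false); last by apply/eqP; lia.
  by rewrite mulr0n add0r (hall (Ordinal hk)).
have h66 : g (o 6) (o 6) = 1 + 2 * (2 * b) by rewrite (gEnt eA) // ht.
clear -hg hb hcol h66.
case: hb => eb; rewrite eb in hcol h66.
- by apply: stab => // k hk; rewrite hcol.
- by exfalso; apply: (no_special hg) => // k hk; rewrite hcol.
Qed.




Lemma descent n : forall g, isG g -> (`|g (o 6) (o 6)| <= n)%N -> inGen g.
Proof.
elim: n => [|n IH] g hg hn.
  by case: hg => _ hp _; move: hn hp; lia.
pose p := fun k : nat => (k != 7%N) && (g (o k.-1) (o 6) < 0).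
pose m := signdiag p.
have hm : inK6 m by apply: inK6_of.
pose g1 := m *m g.
have hg1 : isG g1 by apply: isG_mul => //; exact: inK6_isG.
have g1E k j : (k < 7)%N -> g1 (o k) j = (if p k.+1 then -1 else 1) * g (o k) j.
  by move=> hk; rewrite /g1 /m /signdiag mul_diag_mx !mxE inordK.
have hnn k : (k < 6)%N -> 0 <= g1 (o k) (o 6).
  move=> hk; rewrite g1E; last by lia.
  rewrite /p /= (_ : (k.+1 != 7%N) = true); last by apply/eqP; lia.
  by rewrite /=; case: ifP => h; [rewrite mulN1r; move: h; lia | rewrite mul1r; move/negbT: h; rewrite -leNgt].
have h66 : g1 (o 6) (o 6) = g (o 6) (o 6) by rewrite g1E // /p /= mul1r.
have eg : g = m *m g1 by rewrite /g1 mulmxA inK6_sq // mul1mx.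
case: (boolP [exists j : 'I_28, (7 <= j)%N && (0 < lform (g1 *m e7v int) (uvec j))]).
- case/existsP => j /andP [hj7 hpos].
  have hj : (7 <= j <= 27)%N by rewrite hj7 /=; have := ltn_ord j; lia.
  pose g2 := Rmat j *m g1.
  have hg2 : isG g2 by apply: isG_mul => //; exact: isG_Rmat.
  have e2 := Rmat_col g1 hj.
  have hu := uc6_pos hj.
  have p2 : 0 < g2 (o 6) (o 6) by case: hg2.
  have p1 : 0 < g (o 6) (o 6) by case: hg.
  have lt2 : g2 (o 6) (o 6) < g (o 6) (o 6).
    rewrite /g2 e2 h66 ltrBlDr ltrDl; apply: mulr_gt0 => //; apply: mulr_gt0 => //.
  have ig2 : inGen g2.
    apply: IH => //.
    move: hn p2 p1 lt2; set a := g2 _ _; set b := g _ _; lia.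
  have -> : g = m *m (Rmat j *m g2) by rewrite /g2 [Rmat j *m (_ *m _)]mulmxA Rmat_sq // mul1mx.
  by apply: GKm => //; apply: GR.
- move=> hno.
  have hterm : forall j, (7 <= j <= 27)%N -> lform (g1 *m e7v int) (uvec j) <= 0.
    move=> j hj; have hj28 : (j < 28)%N by lia.
    move/existsPn: hno => /(_ (Ordinal hj28)) /=.
    rewrite (_ : (7 <= j)%N = true) /=; last by lia.
    by rewrite -leNgt.
  have hK := terminal hg1 hnn hterm.
  by rewrite eg; apply: GKm => //; apply: GK.
Qed.


Theorem lemma8p1 (R : realType) : normal_in (@inGamma6_2 R) inH.
Proof.
split.
- by move=> M hM; apply/isG_Gamma; exact: inH_isG.
- move=> g M hg hM.
  have hG := (isG_Gamma R g).1 hg.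
  have gen := descent hG (leqnn _).
  have [_ h] := normalizes_Gen gen.
  exact: h.
Qed.
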